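(* Fix an ordinal $\beta\leq\omega_1$ and consider $\mathbb{S}(\beta)$, with $R_\alpha=\mathcal{O}^\alpha(\sim_e)$. For every $\alpha<\beta$, the restriction of $R_\alpha$ to $I\times(\alpha+1)$ (i.e. to pairs of points of $I\times(\alpha+1)$) is the identity relation, and $V\times\{\alpha\}\in\Sigma(R_\alpha)$, where $\Sigma=\mathcal{B}_V\otimes\mathcal{P}(\beta)$.
   Context: An LMP is $(S,\Sigma,\{\tau_a\}_{a\in L})$ with $L$ countable and Markov kernels $\tau_a$. $\Sigma(R)$ = $R$-closed members of $\Sigma$ ($x\in A$, $xRs\Rightarrow s\in A$); $\mathcal{R}(\Gamma)=\{(s,t):\forall A\in\Gamma\,(s\in A\iff t\in A)\}$; $\mathcal{R}^T(\Lambda)=\{(s,t):\forall a\,\forall E\in\Lambda\ \tau_a(s,E)=\tau_a(t,E)\}$; $\mathcal{O}(R)=\mathcal{R}^T(\Sigma(R))$, $\mathcal{O}^0(R)=R$, $\mathcal{O}^{\alpha+1}=\mathcal{O}\circ\mathcal{O}^\alpha$, $\mathcal{O}^\lambda(R)=\bigcap_{\alpha<\lambda}\mathcal{O}^\alpha(R)$. ${\sim_e}=\mathcal{R}(\sigma(\llbracket\mathcal{L}\rrbracket))$ where $\sigma(\llbracket\mathcal{L}\rrbracket)$ is generated by the denotations of formulas $\top\mid\phi\wedge\psi\mid\langle a\rangle_{>q}\phi$ ($q\in\mathbb{Q}\cap[0,1]$), $\llbracket\langle a\rangle_{>q}\phi\rrbracket=\{s:\tau_a(s,\llbracket\phi\rrbracket)>q\}$.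 The processes $\mathbb{S}(\beta)$: $I=(0,1)$, $\mathfrak{m}$ Lebesgue measure, $V\subseteq I$ Lebesgue nonmeasurable, $\mathcal{B}_V=\sigma(\mathcal{B}(I)\cup\{V\})$, and $\mathfrak{m}_0,\mathfrak{m}_1$ measures on $\mathcal{B}_V$ extending $\mathfrak{m}$ with $\mathfrak{m}_0(V)\neq\mathfrak{m}_1(V)$. Let $\{q_n\}_{n\in\omega}$ enumerate $\mathbb{Q}\cap I$. For ordinals $\eta$: $\alpha_n(0)=0$, $\alpha_n(\zeta+1)=\zeta$ for all $n$, and for limit $\lambda$, $(\alpha_n(\lambda))_{n\in\omega}$ is a fixed strictly increasing sequence of nonzero ordinals below $\lambda$ cofinal in $\lambda$. For an ordinal $\beta\leq\omega_1$, $\mathbb{S}(\beta)=(I\times\beta,\ \mathcal{B}_V\otimes\mathcal{P}(\beta),\ \{\tau_n\}_{n\in\omega})$ with $\tau_n((x,\eta),A)=x\cdot\mathfrak{m}_0(A_0)$ if $\eta=0$; $=\mathfrak{m}_0(A_{\alpha_n(\eta)})$ if $\eta>0$ and $x<q_n$; $=\mathfrak{m}_1(A_{\alpha_n(\eta)})$ if $\eta>0$ and $x\geq q_n$; here $A_\gamma=\{r:(r,\gamma)\in A\}$. These $\tau_n$ are Markov kernels, so $\mathbb{S}(\beta)$ is an LMP. *)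

(* Defs.v *)
From HB Require Import structures.
From mathcomp Require Import all_boot all_order all_algebra.
From mathcomp Require Import all_classical all_reals all_analysis.

Set Implicit Arguments.
Unset Strict Implicit.
Unset Printing Implicit Defensive.

Import Order.TTheory GRing.Theory Num.Theory.
Local Open Scope classical_set_scope.
Local Open Scope ring_scope.

(* Ordinals: an ordinal beta is represented by a type B of its elements *)
(* (the ordinals alpha < beta) with a strict well-founded total order.  *)

Section Ordinals.
Variables (B : Type) (lt : B -> B -> Prop).

Definition is_well_order : Prop :=
  well_founded lt /\
  (forall a b c, lt a b -> lt b c -> lt a c) /\
  (forall a b, lt a b \/ a = b \/ lt b a).

(* beta <= omega_1 : every alpha < beta is countable, i.e. its set of
   predecessors is enumerated by nat *)
Definition countable_initial_segments : Prop :=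
  forall a : B, exists f : nat -> B, forall g, lt g a -> exists n, f n = g.

Definition is_zero (a : B) : Prop := forall b, ~ lt b a.
Definition le (a b : B) : Prop := lt a b \/ a = b.
Definition is_succ_of (a g : B) : Prop :=
  lt g a /\ forall d, lt g d -> ~ lt d a.
Definition is_limit (a : B) : Prop :=
  ~ is_zero a /\ ~ (exists g, is_succ_of a g).

Definition fundamental_sequences (alpha : nat -> B -> B) : Prop :=
  (forall n a, is_zero a -> alpha n a = a) /\
  (forall n a g, is_succ_of a g -> alpha n a = g) /\
  (forall l, is_limit l ->
     (forall n, lt (alpha n l) (alpha n.+1 l)) /\
     (forall n, ~ is_zero (alpha n l)) /\
     (forall n, lt (alpha n l) l) /\
     (forall g, lt g l -> exists n, lt g (alpha n l))).

End Ordinals.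

Section LMP.
Variables (R : realType) (S : Type).
Variable (Sigma : set (set S)).
Variable (tau : nat -> S -> set S -> \bar R).

Definition rel_of (Gamma : set (set S)) : S -> S -> Prop :=
  fun s t => forall A, Gamma A -> (A s <-> A t).

Definition closed_sets (Rl : S -> S -> Prop) : set (set S) :=
  [set A | Sigma A /\ forall x s, A x -> Rl x s -> A s].

Definition relT (Lambda : set (set S)) : S -> S -> Prop :=
  fun s t => forall a E, Lambda E -> tau a s E = tau a t E.

Definition Oop (Rl : S -> S -> Prop) : S -> S -> Prop :=
  relT (closed_sets Rl).

Inductive formula :=
  | FTop
  | FAnd of formula & formula
  | FDia of nat & rat & formula.

Fixpoint formula_wf (f : formula) : Prop :=
  match f with
  | FTop => True
  | FAnd f1 f2 => formula_wf f1 /\ formula_wf f2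
  | FDia _ q f1 => (0 <= q <= 1)%R /\ formula_wf f1
  end.

Fixpoint denot (f : formula) : set S :=
  match f with
  | FTop => setT
  | FAnd f1 f2 => denot f1 `&` denot f2
  | FDia a q f1 => [set s | ((ratr q)%:E < tau a s (denot f1))%E]
  end.

Definition denotations : set (set S) :=
  [set A | exists f, formula_wf f /\ A = denot f].

Definition sim_e : S -> S -> Prop := rel_of (<<s denotations >>).

End LMP.

Section Iterate.
Variables (B : Type) (lt : B -> B -> Prop) (wf : well_founded lt).
Variables (S : Type) (O : (S -> S -> Prop) -> (S -> S -> Prop)).
Variable (R0 : S -> S -> Prop).

Definition Oiter_step (a : B) (rec : forall g, lt g a -> S -> S -> Prop)
  : S -> S -> Prop :=
  fun s t =>
    (is_zero lt a /\ R0 s t) \/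
    (exists g (h : lt g a), is_succ_of lt a g /\ O (rec g h) s t) \/
    (is_limit lt a /\ forall g (h : lt g a), rec g h s t).

Definition Oiter : B -> S -> S -> Prop :=
  Fix wf (fun _ => S -> S -> Prop) Oiter_step.

End Iterate.

Section Sbeta.
Variable R : realType.

Definition Iset : set R := [set x | 0 < x < 1].
Definition I : Type := {x : R | 0 < x < 1}.

Lemma half_in_I : (0 : R) < (2 : R)^-1 < 1.
Proof. apply/andP; split; [by rewrite invr_gt0 ltr0n | by rewrite invf_lt1 ?ltr0n // ltr1n]. Qed.

HB.instance Definition _ := Choice.copy I {x : R | 0 < x < 1}.
HB.instance Definition _ := isPointed.Build I (exist _ ((2 : R)^-1) half_in_I).

Definition Borel_I : set (set I) :=
  [set A | measurable (sval @` A : set (measurableTypeR R))].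

(* Lebesgue measurable subsets of R (completed Lebesgue sigma-algebra) *)
Definition lebesgue_measurable (A : set R) : Prop :=
  measurable (A : set (caratheodory_type (R:=R) (wlength (R:=R) idfun)^*%mu)).

Definition BV_gen (V : set I) : set (set I) := Borel_I `|` [set V].
Definition BV (V : set I) : set (set I) := <<s BV_gen V >>.
End Sbeta.
Notation BVType V := (g_sigma_algebraType (BV_gen V)).
Section Sbeta2.
Variable R : realType.

Definition ratI : set R := [set x | (exists r : rat, x = ratr r) /\ 0 < x < 1].

Definition enumerates_QI (q : nat -> R) : Prop :=
  injective q /\ (forall n, ratI (q n)) /\ (forall x, ratI x -> exists n, q n = x).

Variables (B : Type) (lt : B -> B -> Prop).

Definition state := (I R * B)%type.

Definition SigmaS (V : set (I R)) : set (set state) :=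
  <<s [set X | exists A (C : set B), BV V A /\ X = A `*` C] >>.

Definition section (A : set state) (g : B) : set (I R) := [set r | A (r, g)].

Variables (q : nat -> R) (alpha : nat -> B -> B) (m0 m1 : set (I R) -> \bar R).

Definition tauS (n : nat) (s : state) (A : set state) : \bar R :=
  let: (x, eta) := s in
  if `[< is_zero lt eta >] then ((sval x)%:E * m0 (section A eta))%E
  else if sval x < q n then m0 (section A (alpha n eta))
  else m1 (section A (alpha n eta)).

End Sbeta2.

(* Main.v *)
Require Import Defs.
From HB Require Import structures.
From mathcomp Require Import all_boot all_order all_algebra.
From mathcomp Require Import all_classical all_reals all_analysis.
Import Order.TTheory GRing.Theory Num.Theory.
Local Open Scope classical_set_scope.
Local Open Scope ring_scope.
Set Implicit Arguments.

Lemma Oiter_eq (B : Type) (lt : B -> B -> Prop) (wf : well_founded lt) (S : Type)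
  (O : (S -> S -> Prop) -> (S -> S -> Prop)) (R0 : S -> S -> Prop) (a : B) :
  Oiter wf O R0 a = @Oiter_step B lt S O R0 a (fun g _ => Oiter wf O R0 g).
Proof.
rewrite /Oiter Fix_eq //.
move=> x f g H; have -> : f = g; last by [].
by apply: functional_extensionality_dep => y; apply: functional_extensionality_dep => p.
Qed.

Section Ord.
Lemma irrefl_wf (B : Type) (lt : B -> B -> Prop) (wf : well_founded lt) x : ~ lt x x.
Proof.
elim: (wf x) => y _ IH H; exact: (IH y H H).
Qed.

Lemma zero_uniq (B : Type) (lt : B -> B -> Prop)
  (Htotal : forall a b, lt a b \/ a = b \/ lt b a) a b :
  is_zero lt a -> is_zero lt b -> a = b.
Proof. by move=> za zb; case: (Htotal a b) => [/zb|[|/za]]. Qed.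

Lemma succ_uniq (B : Type) (lt : B -> B -> Prop)
  (Htotal : forall a b, lt a b \/ a = b \/ lt b a) a b g :
  is_succ_of lt a g -> is_succ_of lt b g -> a = b.
Proof.
move=> [ga Ha] [gb Hb]; case: (Htotal a b) => [ab|[//|ba]].
  by case: (Hb a ga ab).
by case: (Ha b gb ba).
Qed.

Lemma classify (B : Type) (lt : B -> B -> Prop) a :
  ~ is_zero lt a -> is_limit lt a \/ exists g, is_succ_of lt a g.
Proof.
move=> nz; case: (pselect (exists g, is_succ_of lt a g)) => [h|h]; [by right|by left].
Qed.

Lemma nonzero_lt (B : Type) (lt : B -> B -> Prop) a :
  ~ is_zero lt a -> exists b, lt b a.
Proof.
move=> nz; apply: contra_notP nz => h b hb; apply: h; by exists b.
Qed.

Lemma succ_exists (B : Type) (lt : B -> B -> Prop) (wf : well_founded lt) g d :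
  lt g d -> exists d', is_succ_of lt d' g.
Proof.
elim: (wf d) => {}d _ IH gd.
case: (pselect (exists e, lt g e /\ lt e d)) => [[e [ge ed]]|h].
  exact: (IH e ed ge).
exists d; split => // e ge ed; apply: h; by exists e.
Qed.

Lemma succ_le (B : Type) (lt : B -> B -> Prop)
  (Htotal : forall a b, lt a b \/ a = b \/ lt b a) d g c :
  is_succ_of lt d g -> lt c d -> c = g \/ lt c g.
Proof.
move=> [gd Hd] cd; case: (Htotal c g) => [cg|[cg|gc]]; [by right|by left|].
by case: (Hd c gc cd).
Qed.

Lemma alpha_lt (B : Type) (lt : B -> B -> Prop) alpha
  (Halpha : fundamental_sequences lt alpha) c n :
  ~ is_zero lt c -> lt (alpha n c) c.
Proof.
move: Halpha => [_ [Hs Hl]] nz.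
case: (classify nz) => [/Hl [_ [_ [H _]]]//|[g Hg]].
by rewrite (Hs _ _ _ Hg); case: Hg.
Qed.

Lemma ident (B : Type) (lt : B -> B -> Prop) (wf : well_founded lt)
  (Htrans : forall a b c, lt a b -> lt b c -> lt a c)
  (Htotal : forall a b, lt a b \/ a = b \/ lt b a) alpha
  (Halpha : fundamental_sequences lt alpha) c d :
  ~ is_zero lt c -> ~ is_zero lt d -> (forall n, alpha n c = alpha n d) -> c = d.
Proof.
move=> zc zd E; have [_ [Hs Hl]] := Halpha.
have lim_succ : forall c d g, is_limit lt c -> is_succ_of lt d g ->
    (forall n, alpha n c = alpha n d) -> False.
  move=> c' d' g lc sd E'.
  have [H0 _] := Hl c' lc.
  have := H0 0%N; rewrite !E' !(Hs _ _ _ sd); exact: irrefl_wf.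
have lim_lim : forall c d, is_limit lt c -> is_limit lt d ->
    (forall n, alpha n c = alpha n d) -> ~ lt c d.
  move=> c' d' lc ld E' cd.
  have [_ [_ [Hlt Hcof]]] := Hl d' ld.
  have [_ [_ [Hlt' _]]] := Hl c' lc.
  have [m Hm] := Hcof c' cd.
  rewrite -E' in Hm.
  exact: (irrefl_wf wf _ (Htrans _ _ _ Hm (Hlt' m))).
case: (classify zc) => [lc|[g sc]]; case: (classify zd) => [ld|[g' sd]].
- case: (Htotal c d) => [cd|[//|dc]]; first by case: (lim_lim c d lc ld E cd).
  by case: (lim_lim d c ld lc (fun n => esym (E n)) dc).
- by case: (lim_succ c d g' lc sd E).
- by case: (lim_succ d c g ld sc (fun n => esym (E n))).
- have := E 0%N; rewrite (Hs _ _ _ sc) (Hs _ _ _ sd) => eg; subst g'.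
  exact: (succ_uniq Htotal sc sd).
Qed.
End Ord.
Theorem lemma5p8
  (R : realType)
  (* the ordinal beta <= omega_1, as a well-ordered type of its elements *)
  (B : Type) (lt : B -> B -> Prop)
  (Hwf : well_founded lt)
  (Htrans : forall a b c, lt a b -> lt b c -> lt a c)
  (Htotal : forall a b, lt a b \/ a = b \/ lt b a)
  (Hcount : countable_initial_segments lt)
  (alpha : nat -> B -> B) (Halpha : fundamental_sequences lt alpha)
  (* enumeration of Q cap I *)
  (q : nat -> R) (Hq : enumerates_QI q)
  (* the Lebesgue nonmeasurable set V and the two extensions of m *)
  (V : set (I R)) (HV : ~ lebesgue_measurable (sval @` V))
  (m0 m1 : {measure set (BVType V) -> \bar R})
  (Hm0 : forall A, Borel_I A -> m0 A = lebesgue_measure (sval @` A))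
  (Hm1 : forall A, Borel_I A -> m1 A = lebesgue_measure (sval @` A))
  (Hm01 : m0 V <> m1 V)
  (a : B) :
  let tau := tauS lt q alpha m0 m1 in
  let Sig := SigmaS (B:=B) V in
  let Ra := Oiter Hwf (Oop Sig tau) (sim_e tau) a in
  (forall s t : state R B, le lt s.2 a -> le lt t.2 a -> (Ra s t <-> s = t)) /\
  closed_sets Sig Ra (V `*` [set a]).
Proof.
move=> tau Sig.
have BorelT : Borel_I (setT : set (I R)).
  rewrite /Borel_I /mkset /=.
  have -> : (sval @` (setT : set (I R)) : set (measurableTypeR R)) = `]0, 1[%classic.
    apply/seteqP; split=> x /=.
      by move=> [p _ <-]; rewrite in_itv /=; case: p.
    rewrite in_itv /= => Hx; by exists (exist _ x Hx).
  exact: measurable_itv.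
have leb01 : lebesgue_measure (sval @` (setT : set (I R))) = 1%E.
  have -> : (sval @` (setT : set (I R))) = `]0, 1[%classic.
    apply/seteqP; split=> x /=.
      by move=> [p _ <-]; rewrite in_itv /=; case: p.
    rewrite in_itv /= => Hx; by exists (exist _ x Hx).
  by rewrite lebesgue_measure_itv /= lte_fin ltr01 oppr0 adde0.
have m0T : m0 (setT : set (I R)) = 1%E by rewrite Hm0.
have m1T : m1 (setT : set (I R)) = 1%E by rewrite Hm1.
have BVT : BV V (setT : set (I R)) by apply: sub_gen_smallest; left.
have BVV : BV V V by apply: sub_gen_smallest; right.
have SigX : forall (A : set (I R)) (C : set B), BV V A -> Sig (A `*` C).
  by move=> A C HA; apply: sub_gen_smallest; exists A, C.
have SigT : Sig setT.
  have -> : (setT : set (state R B)) = (setT : set (I R)) `*` (setT : set B).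
    by apply/seteqP; split=> -[].
  exact: SigX.
have secX : forall (A : set (I R)) (c g : B),
    section (A `*` [set c]) g = if `[< g = c >] then A else set0.
  move=> A c g; case: (pselect (g = c)) => [->|ne].
    by rewrite asboolT //; apply/seteqP; split => x /=; [case|].
  by rewrite asboolF //; apply/seteqP; split => x /= //; case.
have secT : forall g, section (setT : set (state R B)) g = setT.
  by move=> g; apply/seteqP; split.
have tau0 : forall n x g A, is_zero lt g ->
    tau n (x, g) A = ((sval x)%:E * m0 (section A g))%E.
  by move=> n x g A zg; rewrite /tau /tauS asboolT.
have tauN : forall n x g A, ~ is_zero lt g ->
    tau n (x, g) A = if sval x < q n then m0 (section A (alpha n g))
                     else m1 (section A (alpha n g)).
  by move=> n x g A zg; rewrite /tau /tauS asboolF.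
have closedX : forall (Rl : state R B -> state R B -> Prop) (A : set (I R)) (g : B),
    BV V A -> (forall z u, Rl (z, g) u -> u = (z, g)) ->
    closed_sets Sig Rl (A `*` [set g]).
  move=> Rl A g HA HR; split; first exact: SigX.
  move=> [z g'] s [/= Az eg] Hs; rewrite eg in Hs; rewrite (HR _ _ Hs); by split.
have closedT : forall (Rl : state R B -> state R B -> Prop), closed_sets Sig Rl setT.
  by move=> Rl; split.
pose Rr := Oiter Hwf (Oop Sig tau) (sim_e tau).
have refl : forall b s, Rr b s s.
  move=> b; elim: (Hwf b) => {}b _ IH s; rewrite /Rr Oiter_eq /Oiter_step.
  case: (pselect (is_zero lt b)) => zb; first by left; split => // A _.
  case: (classify zb) => [lb|[g sg]]; right; [right|left].
    by split => // g h; exact: IH.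
  by exists g, sg.1; split => // n E _.
pose D := fun b => forall g, le lt g b -> forall z u, Rr b (z, g) u -> u = (z, g).
have tests : forall b s t, ~ is_zero lt b -> (forall c, lt c b -> D c) -> Rr b s t ->
    forall g, lt g b -> exists Rl, Oop Sig tau Rl s t /\
      forall z u, Rl (z, g) u -> u = (z, g).
  move=> b s t zb IHD Hb g gb.
  move: Hb; rewrite /Rr Oiter_eq /Oiter_step => -[[zb' _]|[[g' [h [sg HO]]]|[lb Hall]]].
  - by [].
  - exists (Rr g'); split; first exact: HO.
    have [e|lt'] := succ_le Htotal _ sg gb; apply: (IHD g' h g); rewrite /le; by [right|left].
  - have [d sd] := succ_exists Hwf _ _ gb.
    have db : lt d b.
      case: (Htotal d b) => [//|[e|bd]]; last by case: (sd.2 b gb bd).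
      by subst d; case: lb.2; exists g.
    move: (Hall d db); rewrite Oiter_eq /Oiter_step => -[[zd _]|[[g' [h [sg' HO]]]|[ld _]]].
    + by case: (zd g sd.1).
    + exists (Rr g'); split; first exact: HO.
      have [e|lt'] := succ_le Htotal _ sg' sd.1;
        apply: (IHD g' (Htrans _ _ _ h db) g); rewrite /le; by [right|left].
    + by case: ld.2; exists g.
have Ibnd : forall x : I R, 0 < sval x /\ sval x < 1.
  by move=> [x Hx]; apply/andP.
have sep : forall x w : R, 0 < x -> x < 1 -> 0 < w -> w <= 1 ->
    (forall r : rat, 0 <= r <= 1 -> ((ratr r)%:E < x%:E <-> (ratr r)%:E < w%:E)%E) ->
    x = w.
  move=> x w x0 x1 w0 w1 H.
  case: (ltgtP x w) => // hxw.
  - have [r] := rat_in_itvoo hxw; rewrite in_itv /= => /andP[xr rw].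
    have hr : 0 <= r <= 1.
      apply/andP; split; first by rewrite -(ler0q R) ltW // (lt_trans x0).
      by rewrite -(ler_rat R) rmorph1 ltW // (lt_le_trans rw).
    have h2 : ((ratr r)%:E < x%:E)%E by apply: (H r hr).2; rewrite lte_fin.
    by move: h2; rewrite lte_fin ltNge (ltW xr).
  - have [r] := rat_in_itvoo hxw; rewrite in_itv /= => /andP[wr rx].
    have hr : 0 <= r <= 1.
      apply/andP; split; first by rewrite -(ler0q R) ltW // (lt_trans w0).
      by rewrite -(ler_rat R) rmorph1 ltW // (lt_trans rx).
    have h2 : ((ratr r)%:E < w%:E)%E by apply: (H r hr).1; rewrite lte_fin.
    by move: h2; rewrite lte_fin ltNge (ltW wr).
have tauT : forall n x g, tau n (x, g) setT =
    (if `[< is_zero lt g >] then sval x else 1)%:E.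
  move=> n x g; case: (pselect (is_zero lt g)) => zg.
    by rewrite tau0 // secT m0T mule1 asboolT.
  by rewrite tauN // secT asboolF //; case: ifP.
have conclude0 : forall (z y : I R) (g eta : B), is_zero lt g ->
    sval z = (if `[< is_zero lt eta >] then sval y else 1) -> (y, eta) = (z, g).
  move=> z y g eta zg; case: (pselect (is_zero lt eta)) => ze.
    rewrite asboolT // => e; congr pair; first exact: val_inj.
    exact: zero_uniq ze zg.
  rewrite asboolF // => e; have := (Ibnd z).2; by rewrite e ltxx.
have [qinj [qI qsurj]] := Hq.
have key : forall (x y : I R) (g : B), ~ is_zero lt g ->
    (forall n, tau n (x, g) (V `*` [set alpha n g]) = tau n (y, g) (V `*` [set alpha n g])) ->
    ~ sval x < sval y.
  move=> x y g zg H hxy.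
  have [r] := rat_in_itvoo hxy; rewrite in_itv /= => /andP[xr ry].
  have hI : ratI (ratr r : R).
    split; first by exists r.
    apply/andP; split; first exact: lt_trans (Ibnd x).1 xr.
    exact: lt_trans ry (Ibnd y).2.
  have [n qn] := qsurj _ hI.
  have := H n; rewrite !tauN // !secX asboolT // qn xr.
  by rewrite ltNge (ltW ry) /=.
have sepV : forall (x y : I R) (g : B), ~ is_zero lt g ->
    (forall n, tau n (x, g) (V `*` [set alpha n g]) = tau n (y, g) (V `*` [set alpha n g])) ->
    x = y.
  move=> x y g zg H; apply: val_inj.
  case: (ltgtP (sval x) (sval y)) => // h.
    by case: (key x y g zg H h).
  by case: (key y x g zg (fun n => esym (H n)) h).
have Dall : forall b, D b.
  move=> b; elim: (Hwf b) => {}b _ IH g gb z [y eta] Hu.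
  case: (pselect (is_zero lt b)) => zb.
    have eg : g = b by case: gb => // /zb.
    subst g.
    move: Hu; rewrite /Rr Oiter_eq /Oiter_step => -[[_ Hs]|[[g' [h _]]|[lb _]]];
      [|by case: (zb g' h)|by case: lb.1].
    apply: conclude0 => //.
    apply: sep; first exact: (Ibnd z).1; first exact: (Ibnd z).2.
    - by case: ifP => _; [exact: (Ibnd y).1|exact: ltr01].
    - by case: ifP => _; [exact: ltW (Ibnd y).2|].
    move=> r hr; rewrite -(tauT 0%N y eta).
    have -> : (sval z)%:E = tau 0%N (z, b) setT by rewrite tauT asboolT.
    apply: (Hs (denot tau (FDia 0%N r FTop))).
    by apply: sub_gen_smallest; exists (FDia 0%N r FTop).
  have T := tests b _ _ zb IH Hu.
  have [c0 c0b] := nonzero_lt zb.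
  have [Rl0 [HO0 _]] := T c0 c0b.
  have hT : forall n, tau n (z, g) setT = tau n (y, eta) setT.
    by move=> n; apply: HO0.
  case: (pselect (is_zero lt g)) => zg.
    apply: conclude0 => //.
    by have := hT 0%N; rewrite !tauT asboolT // => -[].
  have ze : ~ is_zero lt eta.
    move=> ze; have := hT 0%N; rewrite !tauT (asboolT ze) (asboolF zg) => -[e].
    by have := (Ibnd y).2; rewrite -e ltxx.
  have galt : forall n, lt (alpha n g) b.
    move=> n; have := alpha_lt Halpha n zg.
    by case: gb => [gb' h|<- //]; exact: Htrans h gb'.
  have Hal : forall n, alpha n g = alpha n eta.
    move=> n; have [Rl [HO HR]] := T _ (galt n).
    have := HO n _ (closedX Rl setT _ BVT HR).
    rewrite !tauN // !secX asboolT //.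
    case: (pselect (alpha n eta = alpha n g)) => [->//|ne].
    rewrite asboolF //.
    case: ifP => _; case: ifP => _; rewrite ?m0T ?m1T ?measure0;
      by move=> /(congr1 fine)/eqP; rewrite /= oner_eq0.
  have eeta : eta = g by apply: (ident Hwf Htrans Htotal Halpha ze zg) => n; rewrite Hal.
  subst eta; congr pair.
  apply: esym; apply: (sepV z y g zg) => n.
  have [Rl [HO HR]] := T _ (galt n).
  exact: HO n _ (closedX Rl V _ BVV HR).
move=> Ra; split.
  move=> s t hs ht; split.
    case: s hs => z g hs H; apply: esym; exact: (Dall a g hs z t H).
  by move=> <-; exact: refl.
split; first exact: SigX.
move=> [z g] s [/= Vz eg] Hs; subst g.
by rewrite (Dall a a (or_intror erefl) z s Hs).
Qed.
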